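(* Let $(K\subseteq L,v)$ be a valued field extension. Suppose that every $y\in L$ can be written as $y=x+a$ with $a\in K$ and $x\in L$ such that $|v(x)|>\Gamma_K$. Then the extension $L|K$ is $vs$-defectless.
   Context: $\Gamma_K$ is the value group of $K$ inside $\Gamma_L$; $|v(x)|>\Gamma_K$ means $v(x)>\gamma$ for all $\gamma\in\Gamma_K$ or $v(x)<\gamma$ for all $\gamma\in\Gamma_K$ (with $v(0)=\infty>\Gamma_K$). A set $\{a_1,\dots,a_n\}\subseteq L$ is $K$-valuation independent if $v(\sum_i c_ia_i)=\min_i v(c_ia_i)$ for all $c_i\in K$; $L|K$ is $vs$-defectless if every finitely generated $K$-vector subspace of $L$ is spanned by a $K$-valuation independent set. *)

(* Defs.v *)
From mathcomp Require Import all_boot all_order all_algebra.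
Set Implicit Arguments. Unset Strict Implicit. Unset Printing Implicit Defensive.
Import GRing.Theory.
Local Open Scope ring_scope.

Definition ordered_abelian_group (G : zmodType) (le : rel G) : Prop :=
  [/\ reflexive le, antisymmetric le, transitive le, total le
    & forall x y z : G, le x y -> le (x + z) (y + z)].

(* Γ ∪ {∞}, with None = ∞. *)
Definition oadd (G : zmodType) (a b : option G) : option G :=
  match a, b with Some x, Some y => Some (x + y) | _, _ => None end.

Definition ole (G : zmodType) (le : rel G) (a b : option G) : bool :=
  match a, b with
  | _, None => true
  | None, Some _ => false
  | Some x, Some y => le x y
  end.

Definition olt (G : zmodType) (le : rel G) (a b : option G) : bool :=
  ole le a b && (a != b).

Definition omin (G : zmodType) (le : rel G) (a b : option G) : option G :=
  if ole le a b then a else b.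

Definition ominseq (G : zmodType) (le : rel G) (s : seq (option G)) : option G :=
  foldr (omin le) None s.

Definition is_valuation (L : fieldType) (G : zmodType) (le : rel G)
  (v : L -> option G) : Prop :=
  [/\ forall x, v x = None <-> x = 0,
      forall x y, v (x * y) = oadd (v x) (v y)
    & forall x y, ole le (omin le (v x) (v y)) (v (x + y))].

Section ValuedExt.
Variables (K L : fieldType) (emb : {rmorphism K -> L})
          (G : zmodType) (le : rel G) (v : L -> option G).

Definition in_GammaK (g : G) : Prop :=
  exists a : K, a != 0 /\ v (emb a) = Some g.

Definition abs_v_gt_GammaK (x : L) : Prop :=
  (forall g, in_GammaK g -> olt le (Some g) (v x)) \/
  (forall g, in_GammaK g -> olt le (v x) (Some g)).

Definition Klincomb (b : seq L) (c : nat -> K) : L :=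
  \sum_(i < size b) emb (c i) * b`_i.

Definition in_Kspan (b : seq L) (y : L) : Prop :=
  exists c : nat -> K, y = Klincomb b c.

Definition Kval_independent (b : seq L) : Prop :=
  uniq b /\
  forall c : nat -> K,
    v (Klincomb b c) =
    ominseq le [seq v (emb (c i) * b`_i) | i <- iota 0 (size b)].

Definition vs_defectless : Prop :=
  forall s : seq L, exists b : seq L,
    Kval_independent b /\ (forall y, in_Kspan s y <-> in_Kspan b y).

End ValuedExt.

(* Main.v *)
Require Import Defs.
From mathcomp Require Import all_boot all_order all_algebra ring.
From Stdlib Require Import Classical.
Set Implicit Arguments. Unset Strict Implicit. Unset Printing Implicit Defensive.
Import GRing.Theory.
Local Open Scope ring_scope.

Section Aux.
Variables (K L : fieldType) (emb : {rmorphism K -> L})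
          (G : zmodType) (le : rel G) (v : L -> option G).
Hypothesis hG : ordered_abelian_group le.
Hypothesis hv : is_valuation le v.

Let lerefl : reflexive le. Proof. by case: hG. Qed.
Let leanti : antisymmetric le. Proof. by case: hG. Qed.
Let letr : transitive le. Proof. by case: hG. Qed.
Let letot : total le. Proof. by case: hG. Qed.
Let leadd : forall x y z : G, le x y -> le (x + z) (y + z). Proof. by case: hG. Qed.

Let v0 x : v x = None <-> x = 0. Proof. by case: hv. Qed.
Let vM x y : v (x * y) = oadd (v x) (v y). Proof. by case: hv. Qed.
Let vD x y : ole le (omin le (v x) (v y)) (v (x + y)). Proof. by case: hv. Qed.

Lemma ole_refl a : ole le a a. Proof. by case: a => //= x; apply: lerefl. Qed.
Lemma ole_anti a b : ole le a b -> ole le b a -> a = b.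
Proof. case: a => [x|]; case: b => [y|] //= h1 h2; congr Some; apply: leanti; by rewrite h1 h2. Qed.
Lemma ole_trans a b c : ole le a b -> ole le b c -> ole le a c.
Proof. case: a => [x|]; case: b => [y|]; case: c => [z|] //= h1 h2; apply: letr h1 h2. Qed.
Lemma ole_total a b : ole le a b || ole le b a.
Proof. by case: a; case: b => //= x y; apply: letot. Qed.
Lemma omin_l a b : ole le a b -> omin le a b = a. Proof. by rewrite /omin => ->. Qed.
Lemma omin_r a b : ~~ ole le a b -> omin le a b = b /\ ole le b a.
Proof. rewrite /omin => /negbTE h; rewrite h; split => //. by have := ole_total a b; rewrite h. Qed.

Lemma v_neq0 x : x != 0 -> exists p, v x = Some p.
Proof. move=> /eqP hx; case E: (v x) => [p|]; first by exists p. by move/v0: E. Qed.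

Lemma v1 : v 1 = Some 0.
Proof.
have [p hp] := v_neq0 (oner_neq0 L).
have := vM 1 1; rewrite mulr1 hp /= => -[] h.
by congr Some; apply: (@addrI _ p); rewrite addr0 -h.
Qed.

Lemma oadd0 (o : option G) : oadd (Some 0) o = o. Proof. by case: o => //= x; rewrite add0r. Qed.

Lemma vN1 : v (-1) = Some 0.
Proof.
have [b hb] : exists b, v (-1) = Some b by apply: v_neq0; rewrite oppr_eq0 oner_eq0.
have := vM (-1) (-1); rewrite mulrNN mulr1 v1 hb /= => -[] hbb.
congr Some.
have [h|h] := orP (letot b 0).
- have := leadd b h; rewrite -hbb add0r => h2; apply: leanti; by rewrite h h2.
- have := leadd b h; rewrite -hbb add0r => h2; apply: leanti; by rewrite h h2.
Qed.

Lemma vN x : v (- x) = v x.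
Proof. by rewrite -mulN1r vM vN1 oadd0. Qed.

Lemma vinv u q : v u = Some q -> v u^-1 = Some (- q).
Proof.
move=> hu; have u0 : u != 0 by apply/eqP => /v0; rewrite hu.
have [r hr] := v_neq0 (invr_neq0 u0).
have := vM u u^-1; rewrite mulfV // v1 hu hr /= => -[] /eqP.
by rewrite eq_sym addrC addr_eq0 => /eqP ->.
Qed.

Lemma ultra_aux x y : v x <> v y -> ole le (v x) (v y) -> v (x + y) = v x.
Proof.
move=> ne hxy.
have h1 := vD x y; rewrite omin_l // in h1.
have h2 := vD (x + y) (- y); rewrite addrK vN in h2.
apply: ole_anti => //.
case E: (ole le (v (x + y)) (v y)).
  by rewrite omin_l in h2.
have [E1 E2] := omin_r (negbT E); rewrite E1 in h2.
by case: ne; apply: ole_anti.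
Qed.

Lemma ultra x y : v x <> v y -> v (x + y) = omin le (v x) (v y).
Proof.
move=> ne; case E: (ole le (v x) (v y)).
  by rewrite omin_l // ultra_aux.
have [-> E2] := omin_r (negbT E).
by rewrite addrC ultra_aux //; move=> h; apply: ne.
Qed.


Lemma ominseq_mem (l : seq (option G)) : ominseq le l = None \/ ominseq le l \in l.
Proof.
elim: l => [|a l IH] /=; first by left.
rewrite /omin; case: ifP => _; first by right; rewrite mem_head.
by case: IH => [->|h]; [left|right; rewrite in_cons h orbT].
Qed.

Lemma Klincomb_cons x b c :
  Klincomb emb (x :: b) c = emb (c 0%N) * x + Klincomb emb b (fun i => c i.+1).
Proof. by rewrite /Klincomb big_ord_recl. Qed.

Lemma map_iota_S (T : Type) (f : nat -> T) n m :
  [seq f i | i <- iota m.+1 n] = [seq f i.+1 | i <- iota m n].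
Proof. by elim: n m => //= n IH m; rewrite IH. Qed.

Definition sameclass (u y : L) := exists a : K, a != 0 /\ v y = v (emb a * u).

Fixpoint good (b : seq L) : Prop :=
  match b with
  | [::] => True
  | x :: b' => x != 0 /\ (forall u, u \in b' -> ~ sameclass u x) /\ good b'
  end.

Lemma emb_neq0 a : a != 0 -> emb a != 0.
Proof. by rewrite fmorph_eq0. Qed.

Lemma vmul_eq0 a x : v (emb a * x) <> None -> a != 0.
Proof. by move=> h; apply/eqP => a0; apply: h; apply/v0; rewrite a0 rmorph0 mul0r. Qed.

Lemma indep b : good b -> forall c,
  v (Klincomb emb b c) = ominseq le [seq v (emb (c i) * b`_i) | i <- iota 0 (size b)].
Proof.
elim: b => [|x b IH] /=.
  by move=> _ c; rewrite /Klincomb big_ord0; apply/v0.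
move=> [hx [hcl hg]] c; rewrite Klincomb_cons map_iota_S /=.
have hm := IH hg (fun i => c i.+1); move: hm => /=.
set S := Klincomb emb b _; set l := map _ _ => hm.
have [E|ne] := eqVneq (v (emb (c 0%N) * x)) (v S); last first.
  by rewrite ultra; [rewrite hm | apply/eqP].
have [S0|Sn] := eqVneq (v S) None.
  have S0' : S = 0 by apply/v0.
  have A0 : emb (c 0%N) * x = 0 by apply/v0; rewrite E S0.
  rewrite S0' A0 addr0 -hm S0.
  have V0 : v 0 = None by apply/v0.
  by rewrite V0.
case: (ominseq_mem l) => hM; first by move: Sn; rewrite hm hM eqxx.
exfalso; move: hM; rewrite -hm => /mapP [i]; rewrite mem_iota add0n => /andP [_ hi] hEi.
apply: (hcl (b`_i)); first by rewrite mem_nth.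
set ci := c i.+1 in hEi *; set c0 := c 0%N in E *.
have c00 : c0 != 0 by apply: (@vmul_eq0 _ x); rewrite E; apply/eqP.
have ci0 : ci != 0 by apply: (@vmul_eq0 _ (b`_i)); rewrite -hEi; apply/eqP.
exists (c0^-1 * ci); split; first by rewrite mulf_neq0 ?invr_eq0.
rewrite rmorphM fmorphV -mulrA vM -hEi -E -vM mulrA mulVf ?mul1r // fmorph_eq0.
exact: c00.
Qed.

Lemma good_uniq b : good b -> uniq b.
Proof.
elim: b => //= x b IH [hx [hcl hg]]; rewrite IH // andbT.
apply/negP => hin; apply: (hcl x hin); exists 1; split; first exact: oner_neq0.
by rewrite rmorph1 mul1r.
Qed.

Lemma span_consE x b y : in_Kspan emb (x :: b) y <->
  exists a y', in_Kspan emb b y' /\ y = emb a * x + y'.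
Proof.
split.
  move=> [c ->]; exists (c 0%N), (Klincomb emb b (fun i => c i.+1)); split.
    by exists (fun i => c i.+1).
  by rewrite Klincomb_cons.
move=> [a [y' [[c ->] ->]]].
by exists (fun i => if i is j.+1 then c j else a); rewrite Klincomb_cons.
Qed.

Lemma span0 b : in_Kspan emb b 0.
Proof.
exists (fun _ => 0); rewrite /Klincomb big1 // => i _.
by rewrite rmorph0 mul0r.
Qed.

Lemma spanD b y1 y2 : in_Kspan emb b y1 -> in_Kspan emb b y2 -> in_Kspan emb b (y1 + y2).
Proof.
move=> [c1 ->] [c2 ->]; exists (fun i => c1 i + c2 i).
by rewrite /Klincomb -big_split /=; apply: eq_bigr => i _; rewrite rmorphD mulrDl.
Qed.

Lemma spanZ b a y : in_Kspan emb b y -> in_Kspan emb b (emb a * y).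
Proof.
move=> [c ->]; exists (fun i => a * c i).
by rewrite /Klincomb mulr_sumr; apply: eq_bigr => i _; rewrite rmorphM mulrA.
Qed.

Lemma span_tail x b y : in_Kspan emb b y -> in_Kspan emb (x :: b) y.
Proof. by move=> h; apply/span_consE; exists 0, y; rewrite rmorph0 mul0r add0r. Qed.

Lemma span_head x b a : in_Kspan emb (x :: b) (emb a * x).
Proof. by apply/span_consE; exists a, 0; rewrite addr0; split => //; apply: span0. Qed.

Lemma span_sub s b : (forall x, x \in s -> in_Kspan emb b x) ->
  forall y, in_Kspan emb s y -> in_Kspan emb b y.
Proof.
elim: s => [|x s IH] hs y.
  by move=> [c ->]; rewrite /Klincomb big_ord0; apply: span0.
move/span_consE => [a [y' [hy' ->]]].
apply: spanD; first by apply: spanZ; apply: hs; rewrite mem_head.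
apply: (IH _ _ hy') => z hz; apply: hs; by rewrite in_cons hz orbT.
Qed.

Hypothesis H : forall y : L, exists (a : K) (x : L),
      y = x + emb a /\ abs_v_gt_GammaK emb le v x.

Lemma inG0 : in_GammaK emb v 0.
Proof. by exists 1; rewrite oner_neq0 rmorph1 v1. Qed.

Lemma reduce b : good b -> forall y, exists w, in_Kspan emb b w /\
  ole le (v y) (v (y - w)) /\
  (y - w = 0 \/ forall u, u \in b -> ~ sameclass u (y - w)).
Proof.
elim: b => [|x b IH] /=.
  move=> _ y; exists 0; split; first exact: span0.
  rewrite subr0; split; first exact: ole_refl.
  by right => u; rewrite in_nil.
move=> [hx [hcl hg]] y.
have [w1 [hw1 [hle1 hz1]]] := IH hg y.
set z1 := y - w1 in hle1 hz1 *.
have [z10|nz1] := eqVneq z1 0.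
  by exists w1; split; [apply: span_tail | split => //; left].
have hz1' : forall u, u \in b -> ~ sameclass u z1.
  by case: hz1 => // h; move: nz1; rewrite h eqxx.
case: (classic (sameclass x z1)) => hsc; last first.
  exists w1; split; first by apply: span_tail.
  split => //; right => u; rewrite in_cons => /orP [/eqP ->|hu] //.
  exact: hz1'.
move: hsc => [a [a0 hva]].
set u := emb a * x.
have u0 : u != 0 by rewrite mulf_neq0 ?fmorph_eq0.
have [q hq] := v_neq0 u0.
have [a1 [x0 [ht habs]]] := H (z1 / u).
case: habs => habs; last first.
  exfalso.
  have vt : v (z1 / u) = Some 0.
    by rewrite vM hva -/u hq (vinv hq) /= subrr.
  have h0 := habs 0 inG0.
  have hlt : olt le (v x0) (v (emb a1)).
    have [a10|a1n] := eqVneq a1 0.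
      rewrite a10 rmorph0; have -> : v 0 = None by apply/v0.
      by move: h0; rewrite /olt; case: (v x0).
    have [g hg'] := v_neq0 (emb_neq0 a1n).
    by rewrite hg'; apply: habs; exists a1.
  move: hlt; rewrite /olt => /andP [hl hne].
  move: vt; rewrite ht ultra; last by apply/eqP.
  rewrite omin_l // => e; move: h0; by rewrite /olt e eqxx andbF.
set z2 := x0 * u.
have ez : z1 - emb (a1 * a) * x = z2.
  have : z1 = (z1 / u) * u by rewrite mulfVK.
  by rewrite ht /z2 /u rmorphM => ->; ring.
have [w2 [hw2 [hle2 hz3]]] := IH hg z2.
exists (w1 + emb (a1 * a) * x + w2); split.
  by apply: spanD; [apply: spanD; [apply: span_tail|apply: span_head]|apply: span_tail].
have ey : y - (w1 + emb (a1 * a) * x + w2) = z2 - w2.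
  by rewrite -ez /z1; ring.
rewrite ey; split.
  apply: ole_trans hle1 _; apply: ole_trans hle2.
  rewrite /z2 vM hva -/u hq; case E: (v x0) => [d|] //=.
  have := habs 0 inG0; rewrite E /olt /= => /andP [h0d _].
  by have := leadd q h0d; rewrite add0r.
have [z30|nz3] := eqVneq (z2 - w2) 0; first by left.
right => u'; rewrite in_cons => /orP [/eqP ->|hu]; last first.
  by case: hz3 => [h|h]; [move: nz3; rewrite h eqxx | exact: h].
move=> [k [k0 hk]].
have [p hp] := v_neq0 hx.
have [gk hgk] := v_neq0 (emb_neq0 k0).
have [ga hga] := v_neq0 (emb_neq0 a0).
have inG : in_GammaK emb v (gk - ga).
  exists (k / a); split; first by rewrite mulf_neq0 ?invr_eq0.
  by rewrite rmorphM fmorphV vM hgk (vinv hga).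
move: hle2; rewrite hk /z2 /u !vM hga hp hgk.
case E: (v x0) => [d|] //= hle.
have := habs _ inG. rewrite E /olt /=. move/andP => [hl hne].
have := leadd (- (ga + p)) hle; rewrite addrK opprD addrACA subrr addr0 => hl2.
have e : gk - ga = d by apply: leanti; rewrite hl hl2.
by move: hne; rewrite e eqxx.
Qed.

End Aux.

Theorem lemma5p12 (K L : fieldType) (emb : {rmorphism K -> L})
  (G : zmodType) (le : rel G) (v : L -> option G) :
  ordered_abelian_group le ->
  is_valuation le v ->
  (forall y : L, exists (a : K) (x : L),
      y = x + emb a /\ abs_v_gt_GammaK emb le v x) ->
  vs_defectless emb le v.
Proof.
move=> hG hv H.
have main : forall s : seq L, exists b, good emb v b /\
    (forall y, in_Kspan emb s y <-> in_Kspan emb b y).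
  elim => [|y s [b [hg hsp]]].
    by exists [::]; split.
  have [w [hw [_ hz]]] := reduce hG hv H hg y.
  have [z0|nz] := eqVneq (y - w) 0.
    have yw : y = w by apply/eqP; rewrite -subr_eq0 z0.
    exists b; split => // t; split.
      move/span_consE => [a [t' [ht' ->]]].
      by apply: spanD; [rewrite yw; apply: spanZ | apply/hsp].
    by move/hsp => ht; apply: span_tail.
  exists (y - w :: b); split.
    split => //; split => //.
    by case: hz => [h|h] //; move: nz; rewrite h eqxx.
  move=> t; split.
    move/span_consE => [a [t' [ht' ->]]].
    have -> : emb a * y + t' = emb a * (y - w) + (emb a * w + t') by ring.
    apply: spanD; first exact: span_head.
    by apply: span_tail; apply: spanD; [apply: spanZ | apply/hsp].
  move/span_consE => [a [t' [ht' ->]]].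
  have -> : emb a * (y - w) + t' = emb a * y + (emb (- a) * w + t').
    by rewrite rmorphN; ring.
  apply: spanD; first exact: span_head.
  by apply: span_tail; apply/hsp; apply: spanD => //; apply: spanZ.
move=> s; have [b [hg hsp]] := main s.
exists b; split => //; split; first exact: good_uniq hg.
exact: (@indep K L emb G le v hG hv b hg).
Qed.
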